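(* Let $\lambda\in(0,1]$, $x=3\lambda/2$ and $y=(2\lambda-x)/2=\lambda/4$. Place a coordinate system with origin at a point $o$ ($x$-axis pointing East, $y$-axis pointing North) and consider the eight open squares with horizontal and vertical sides of side length $x$ centered at $(0,\pm(\lambda+x/2))$, $(\pm(\lambda+x/2),0)$, and $(\pm(x+y),\pm(\lambda+x/2))$ (all four sign combinations), i.e. the gadget $G(o)$. Let $S(o)$ be the convex hull of these eight squares, a square of side $3x+2y$ centered at $o$. Then for every point $a$ not in $S(o)$, the segment $ao$ meets the interior of at least one of the eight squares; in particular, if these squares are obstacles of a terrain, an agent located outside $S(o)$ cannot see $o$.
   Context: An agent at a point $a$ of a terrain sees a point $b$ only if the segment $ab$ is contained in the terrain (and has length at most $1$); obstacles are open sets removed from the terrain. *)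

(* Defs.v *)
From Stdlib Require Import Reals List.
Import ListNotations.
Open Scope R_scope.

Definition open_square (c : R * R) (s : R) (p : R * R) : Prop :=
  Rabs (fst p - fst c) < s / 2 /\ Rabs (snd p - snd c) < s / 2.

Definition gx (lam : R) : R := 3 * lam / 2.
Definition gy (lam : R) : R := (2 * lam - gx lam) / 2.

Definition gadget_centers (lam : R) (o : R * R) : list (R * R) :=
  let d := lam + gx lam / 2 in
  let e := gx lam + gy lam in
  map (fun v => (fst o + fst v, snd o + snd v))
    [ (0, d); (0, - d); (d, 0); (- d, 0);
      (e, d); (e, - d); (- e, d); (- e, - d) ].

Definition gadget (lam : R) (o : R * R) (p : R * R) : Prop :=
  exists c, In c (gadget_centers lam o) /\ open_square c (gx lam) p.

Definition S_hull (lam : R) (o : R * R) : R * R -> Prop :=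
  open_square o (3 * gx lam + 2 * gy lam).

Definition segpt (a b : R * R) (t : R) : R * R :=
  (fst a + t * (fst b - fst a), snd a + t * (snd b - snd a)).

(* Main.v *)
Require Import Defs.
From Stdlib Require Import Reals List Lra Psatz.
Import ListNotations.
Open Scope R_scope.

Lemma abs_lt (x a : R) : -a < x < a -> Rabs x < a.
Proof. intros [H1 H2]. apply Rabs_def1; lra. Qed.

Lemma core (lam p q : R) : 0 < lam -> 5 * lam / 2 <= p -> Rabs q <= p ->
  exists s k, 0 <= s <= 1 /\ (k = 0 \/ k = 7*lam/4 \/ k = - (7*lam/4)) /\
    Rabs (s * q - k) < 3 * lam / 4 /\ Rabs (s * p - 7*lam/4) < 3 * lam / 4.
Proof.
  intros Hl Hp Hq.
  assert (Hp0 : 0 < p) by lra.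
  assert (Hq2 : -p <= q <= p) by (split; [pose proof (Rabs_Ropp q); pose proof (Rle_abs (-q)) | pose proof (Rle_abs q)]; lra); clear Hq; rename Hq2 into Hq.
  destruct (Rlt_or_le q (-(7/10) * p)) as [H1|H1];
  [| destruct (Rlt_or_le q ((7/10) * p)) as [H2|H2]].
  - exists (9*lam/4 / p), (-(7*lam/4)).
    set (s := 9*lam/4/p).
    assert (Hs : s * p = 9*lam/4) by (unfold s; field; lra).
    assert (Hs0 : 0 < s) by (unfold s; apply Rdiv_lt_0_compat; lra).
    split; [split; [lra | apply (Rmult_le_reg_r p); nra] |].
    split; [right; right; reflexivity |].
    split; apply abs_lt; split; nra.
  - exists (21*lam/20 / p), 0.
    set (s := 21*lam/20/p).
    assert (Hs : s * p = 21*lam/20) by (unfold s; field; lra).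
    assert (Hs0 : 0 < s) by (unfold s; apply Rdiv_lt_0_compat; lra).
    split; [split; [lra | apply (Rmult_le_reg_r p); nra] |].
    split; [left; reflexivity |].
    split; apply abs_lt; split; nra.
  - exists (9*lam/4 / p), (7*lam/4).
    set (s := 9*lam/4/p).
    assert (Hs : s * p = 9*lam/4) by (unfold s; field; lra).
    assert (Hs0 : 0 < s) by (unfold s; apply Rdiv_lt_0_compat; lra).
    split; [split; [lra | apply (Rmult_le_reg_r p); nra] |].
    split; [right; left; reflexivity |].
    split; apply abs_lt; split; nra.
Qed.

Theorem lemma2p4 (lam : R) (o a : R * R) :
  0 < lam <= 1 ->
  ~ S_hull lam o a ->
  exists c, In c (gadget_centers lam o) /\
    exists t, 0 <= t <= 1 /\ open_square c (gx lam) (segpt a o t).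
Proof.
  intros [Hl _] HS.
  destruct o as [ox oy]; destruct a as [ax ay].
  unfold S_hull, open_square, gadget_centers, segpt, gy in *; unfold gx in *; simpl in *.
  set (u := ax - ox) in *. set (v := ay - oy) in *.
  assert (E : 3 * (3 * lam / 2) + 2 * ((2 * lam - 3 * lam / 2) / 2) = 5 * lam) by field.
  rewrite E in HS.
  assert (Hd : lam + 3 * lam / 2 / 2 = 7 * lam / 4) by field.
  assert (Hee : 3 * lam / 2 + (2 * lam - 3 * lam / 2) / 2 = 7 * lam / 4) by field.
  rewrite Hd, Hee.
  replace (3 * lam / 2 / 2) with (3 * lam / 4) by field.
  assert (Hfx : forall s k, ax + (1 - s) * (ox - ax) - (ox + k) = s * u - k)
    by (intros; unfold u; ring).
  assert (Hfy : forall s k, ay + (1 - s) * (oy - ay) - (oy + k) = s * v - k)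
    by (intros; unfold u, v; ring).
  assert (Hfx' : forall s k, ax + (1 - s) * (ox - ax) - (ox + k) = - (s * (-u) - (-k)))
    by (intros; unfold u; ring).
  assert (Hfy' : forall s k, ay + (1 - s) * (oy - ay) - (oy + k) = - (s * (-v) - (-k)))
    by (intros; unfold v; ring).
  destruct (Rle_or_lt (Rabs u) (Rabs v)) as [Huv|Huv].
  - assert (Hv : 5 * lam / 2 <= Rabs v).
    { destruct (Rle_or_lt (5 * lam / 2) (Rabs v)); auto.
      exfalso; apply HS; split; lra. }
    destruct (Rle_or_lt 0 v) as [Hv0|Hv0].
    + rewrite (Rabs_pos_eq v) in Hv, Huv by lra.
      destruct (core lam v u Hl Hv Huv) as [s [k [Hs [Hk [H1 H2]]]]].
      exists (ox + k, oy + 7 * lam / 4). split.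
      * destruct Hk as [-> | [-> | ->]]; simpl;
        [replace (ox+0) with (ox+0) by ring; left; f_equal; f_equal; ring
        | do 4 right; left; reflexivity | do 6 right; left; reflexivity].
      * exists (1 - s); split; [lra|]. simpl. rewrite Hfx, Hfy. split; assumption.
    + rewrite (Rabs_left v) in Hv, Huv by lra.
      destruct (core lam (-v) u Hl Hv Huv) as [s [k [Hs [Hk [H1 H2]]]]].
      exists (ox + k, oy + - (7 * lam / 4)). split.
      * destruct Hk as [-> | [-> | ->]]; simpl;
        [right; left; f_equal; f_equal; ring
        | do 5 right; left; reflexivity | do 7 right; left; reflexivity].
      * exists (1 - s); split; [lra|]. simpl. rewrite Hfx, Hfy'. rewrite Rabs_Ropp.
        replace (- - (7 * lam / 4)) with (7 * lam / 4) by ring. split; assumption.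
  - assert (Hu : 5 * lam / 2 <= Rabs u).
    { destruct (Rle_or_lt (5 * lam / 2) (Rabs u)); auto.
      exfalso; apply HS; split; lra. }
    apply Rlt_le in Huv.
    destruct (Rle_or_lt 0 u) as [Hu0|Hu0].
    + rewrite (Rabs_pos_eq u) in Hu, Huv by lra.
      destruct (core lam u v Hl Hu Huv) as [s [k [Hs [Hk [H1 H2]]]]].
      exists (ox + 7 * lam / 4, oy + k). split.
      * destruct Hk as [-> | [-> | ->]]; simpl;
        [do 2 right; left; f_equal; f_equal; ring
        | do 4 right; left; reflexivity | do 5 right; left; reflexivity].
      * exists (1 - s); split; [lra|]. simpl. rewrite Hfx, Hfy. split; assumption.
    + rewrite (Rabs_left u) in Hu, Huv by lra.
      destruct (core lam (-u) v Hl Hu Huv) as [s [k [Hs [Hk [H1 H2]]]]].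
      exists (ox + - (7 * lam / 4), oy + k). split.
      * destruct Hk as [-> | [-> | ->]]; simpl;
        [do 3 right; left; f_equal; f_equal; ring
        | do 6 right; left; reflexivity | do 7 right; left; reflexivity].
      * exists (1 - s); split; [lra|]. simpl. rewrite Hfx', Hfy. rewrite Rabs_Ropp.
        replace (- - (7 * lam / 4)) with (7 * lam / 4) by ring. split; assumption.
Qed.
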